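(* Let $\tau$ be a strongly $(n,p;a,c)$ regular graph with $0<c<p<n-1$, whose adjacency matrix has eigenvalues $p$, $r$ and $s$, where $r=\frac{a-c+\sqrt{(a-c)^2+4(p-c)}}{2}$ and $s=\frac{a-c-\sqrt{(a-c)^2+4(p-c)}}{2}$. Then \begin{align*} &(rn+p-r)^3+(-n+p-r)^3p+(p-r)^3(n-p-1)\ge 0,\\ &(rn+p-s)^3+(-n+p-s)^3p+(p-s)^3(n-p-1)\ge 0,\\ &(rn+p-r)^2(rn+p-s)+(-n+p-r)^2(-n+p-s)p+(p-r)^2(p-s)(n-p-1)\ge 0,\\ &(rn+p-r)(rn+p-s)^2+(-n+p-r)(-n+p-s)^2p+(p-r)(p-s)^2(n-p-1)\ge 0,\\ &(|s|n+s-p)^2(rn+p-s)+(n+s-p)^2(-n+p-s)p+(s-p)^2(p-s)(n-p-1)\ge 0. \end{align*}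
   Context: A graph is strongly $(n,p;a,c)$ regular if it is a simple graph on $n$ vertices, not complete and not null, every vertex has exactly $p$ neighbours, every pair of adjacent vertices has exactly $a$ common neighbours, and every pair of distinct non-adjacent vertices has exactly $c$ common neighbours. *)

(* Defs.v *)
From HB Require Import structures.
From mathcomp Require Import all_boot all_order all_algebra.
Set Implicit Arguments. Unset Strict Implicit. Unset Printing Implicit Defensive.
Import Order.TTheory GRing.Theory Num.Theory.

Definition strongly_regular (T : finType) (e : rel T) (n p a c : nat) : Prop :=
  symmetric e /\ irreflexive e /\ #|T| = n /\
      (exists x y, e x y) /\
      (exists x y, x != y /\ ~~ e x y) /\
      (forall x, #|[set y | e x y]| = p) /\
      (forall x y, x != y -> e x y -> #|[set z | e x z && e y z]| = a) /\
    (forall x y, x != y -> ~~ e x y -> #|[set z | e x z && e y z]| = c).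

Local Open Scope ring_scope.

Definition srg_r (R : rcfType) (p a c : nat) : R :=
  ((a%:R - c%:R) + Num.sqrt ((a%:R - c%:R) ^+ 2 + 4 * (p%:R - c%:R))) / 2.
Definition srg_s (R : rcfType) (p a c : nat) : R :=
  ((a%:R - c%:R) - Num.sqrt ((a%:R - c%:R) ^+ 2 + 4 * (p%:R - c%:R))) / 2.

(* Main.v *)
Require Import Defs.
From HB Require Import structures.
From mathcomp Require Import all_boot all_order all_algebra.
From mathcomp Require Import ring lra.
Import Order.TTheory GRing.Theory Num.Theory.
Set Implicit Arguments. Unset Strict Implicit.
Local Open Scope ring_scope.

Lemma sumr_ind (R : nzRingType) (T : finType) (b : pred T) :
  \sum_z ((b z)%:R : R) = #|[set z | b z]|%:R.
Proof.
rewrite -sum1_card natr_sum [in RHS]big_mkcond /=. apply: eq_bigr => z _ /=.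
by rewrite inE; case: (b z).
Qed.

Definition Kf (T : finType) (e : rel T) (R : fieldType) (k0 k1 k2 : R) (x y : T) : R :=
  if x == y then k0 else if e x y then k1 else k2.

Lemma sumr_delta (R : fieldType) (T : finType) (x : T) (g : T -> R) :
  \sum_z ((x == z)%:R * g z) = g x.
Proof.
rewrite (bigD1 x) //= eqxx mul1r big1 ?addr0 // => z /negbTE.
by rewrite eq_sym => ->; rewrite mul0r.
Qed.

Lemma sumr_delta1 (R : fieldType) (T : finType) (x : T) :
  \sum_z ((x == z)%:R : R) = 1.
Proof.
rewrite -[RHS](sumr_delta x (fun _ => (1:R))); apply: eq_bigr => z _; by rewrite mulr1.
Qed.

Lemma sumr_cst (R : fieldType) (T : finType) (k : R) :
  \sum_(z : T) k = k * #|T|%:R.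
Proof. by rewrite sumr_const mulr_natr. Qed.

Lemma Kf_ind (T : finType) (e : rel T) (R : fieldType) (k0 k1 k2 : R) x y :
  irreflexive e ->
  Kf e k0 k1 k2 x y = (k0 - k2) * (x == y)%:R + (k1 - k2) * (e x y)%:R + k2.
Proof.
move=> irr; rewrite /Kf; case: eqP => [->|_]; first by rewrite irr /=; ring.
by case: (e x y) => /=; ring.
Qed.

Lemma Kf_sum (T : finType) (e : rel T) (R : fieldType) (k0 k1 k2 : R) x (g : T -> R) :
  irreflexive e ->
  \sum_z Kf e k0 k1 k2 x z * g z =
    (k0 - k2) * g x + (k1 - k2) * \sum_z (e x z)%:R * g z + k2 * \sum_z g z.
Proof.
move=> irr.
under eq_bigr => z _ do rewrite Kf_ind // !mulrDl -!mulrA.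
rewrite !big_split /= -!big_distrr /= sumr_delta; ring.
Qed.

Lemma Kf_row (T : finType) (e : rel T) (R : fieldType) (P : R) (k0 k1 k2 : R) x :
  irreflexive e -> (forall x, \sum_z ((e x z)%:R : R) = P) ->
  \sum_z Kf e k0 k1 k2 x z = (k0 - k2) + (k1 - k2) * P + k2 * #|T|%:R.
Proof.
move=> irr hP.
have := Kf_sum k0 k1 k2 x (fun _ => 1) irr.
under eq_bigr do rewrite mulr1.
move=> ->; under eq_bigr do rewrite mulr1.
by rewrite hP sumr_cst mulr1 mul1r.
Qed.

Lemma Kf_sym (T : finType) (e : rel T) (R : fieldType) (k0 k1 k2 : R) x y :
  symmetric e -> Kf e k0 k1 k2 x y = Kf e k0 k1 k2 y x.
Proof. by move=> sym; rewrite /Kf eq_sym sym. Qed.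

Lemma eig (T : finType) (e : rel T) (R : fieldType) (P A C N f0 f1 f2 l : R) :
  irreflexive e -> symmetric e ->
  (forall x, \sum_z ((e x z)%:R : R) = P) ->
  (forall x y, \sum_z ((e x z)%:R * (e z y)%:R : R) = Kf e P A C x y) ->
  #|T|%:R = N ->
  (forall X Y : R,
     (f0-f2)*((f0-f2)*X + (f1-f2)*Y + f2)
   + (f1-f2)*((f0-f2)*Y + (f1-f2)*((P-C)*X + (A-C)*Y + C) + f2*P)
   + f2*((f0-f2) + (f1-f2)*P + f2*N) = l*((f0-f2)*X + (f1-f2)*Y + f2)) ->
  forall x y, \sum_z Kf e f0 f1 f2 x z * Kf e f0 f1 f2 z y = l * Kf e f0 f1 f2 x y.
Proof.
move=> irr sym hP hA hN hid x y.
rewrite (Kf_sum f0 f1 f2 x (fun z => Kf e f0 f1 f2 z y) irr).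
have -> : \sum_z Kf e f0 f1 f2 z y = \sum_z Kf e f0 f1 f2 y z.
  by apply: eq_bigr => z _; rewrite Kf_sym.
rewrite (Kf_row f0 f1 f2 y irr hP) hN.
have -> : \sum_z (e x z)%:R * Kf e f0 f1 f2 z y =
   (f0-f2) * (e x y)%:R + (f1-f2) * Kf e P A C x y + f2 * P.
  under eq_bigr => z _ do rewrite Kf_ind // !mulrDr ![(e x z)%:R * (_ * _)]mulrCA.
  rewrite !big_split /= -!big_distrr /= hA -big_distrl /= hP [_ * f2]mulrC.
  congr (_ * _ + _ + _).
  under eq_bigr => z _ do rewrite eq_sym mulrC.
  by rewrite sumr_delta.
rewrite !Kf_ind // -hid; ring.
Qed.

Lemma prod_sum2 (R : fieldType) (I J : finType) (a : I -> R) (b : J -> R) :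
  (\sum_i a i) * (\sum_j b j) = \sum_(q : I * J) a q.1 * b q.2.
Proof.
rewrite -(pair_bigA _ (fun i j => a i * b j)) big_distrl /=; apply: eq_bigr => i _; by rewrite big_distrr.
Qed.

Lemma schur3 (T : finType) (R : realFieldType) (F G H : T -> T -> R) (lf lg lh : R) :
  0 < lf -> 0 < lg -> 0 < lh ->
  (forall x y, F x y = F y x) -> (forall x y, G x y = G y x) ->
  (forall x y, H x y = H y x) ->
  (forall x y, \sum_z F x z * F z y = lf * F x y) ->
  (forall x y, \sum_z G x z * G z y = lg * G x y) ->
  (forall x y, \sum_z H x z * H z y = lh * H x y) ->
  0 <= \sum_x \sum_y F x y * G x y * H x y.
Proof.
move=> lf0 lg0 lh0 sF sG sH hF hG hH.
have gen : forall (K : T -> T -> R) l, 0 < l -> (forall x y, K x y = K y x) ->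
    (forall x y, \sum_z K x z * K z y = l * K x y) ->
    forall x y, K x y = l^-1 * \sum_z K x z * K y z.
  move=> K l l0 sK hK x y.
  under eq_bigr => z _ do rewrite (sK y z).
  by rewrite hK mulKf // gt_eqF.
pose u (w : T * T * T) x := F x w.1.1 * G x w.1.2 * H x w.2.
have e1 : forall x y, F x y * G x y * H x y =
    (lf * lg * lh)^-1 * \sum_w u w x * u w y.
  move=> x y; rewrite (gen F lf) // (gen G lg) // (gen H lh) //.
  have -> : \sum_w u w x * u w y =
     (\sum_z F x z * F y z) * (\sum_z G x z * G y z) * (\sum_z H x z * H y z).
    rewrite !prod_sum2; apply: eq_bigr => w _; rewrite /u; ring.
  field; apply/and3P; split; by rewrite gt_eqF.
under eq_bigr => x _ do under eq_bigr => y _ do rewrite e1.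
have -> : \sum_x \sum_y (lf * lg * lh)^-1 * \sum_w u w x * u w y =
    (lf * lg * lh)^-1 * \sum_w (\sum_x u w x) ^+ 2.
  under eq_bigr => x _ do rewrite -big_distrr /=.
  rewrite -big_distrr /=; congr (_ * _).
  under [RHS]eq_bigr => w _ do rewrite expr2 big_distrl /=.
  under [RHS]eq_bigr => w _ do under eq_bigr => x _ do rewrite big_distrr /=.
  under eq_bigr => x _ do rewrite exchange_big /=.
  rewrite exchange_big /=.
  under eq_bigr => w _ do rewrite exchange_big /=.
  by [].
apply: mulr_ge0; first by rewrite invr_ge0 ltW // !mulr_gt0.
by apply: sumr_ge0 => w _; apply: sqr_ge0.
Qed.
Definition eqn (R : fieldType) (P A C N f0 f1 f2 l X Y : R) :=
     (f0-f2)*((f0-f2)*X + (f1-f2)*Y + f2)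
   + (f1-f2)*((f0-f2)*Y + (f1-f2)*((P-C)*X + (A-C)*Y + C) + f2*P)
   + f2*((f0-f2) + (f1-f2)*P + f2*N) = l*((f0-f2)*X + (f1-f2)*Y + f2).

Lemma alg_pre (R : fieldType) (r s N P A C : R) :
  C != 0 -> r + s = A - C -> r * s = C - P -> P * P = P - C + (A - C) * P + C * N ->
  [/\ A = r + s + C, P = C - r * s &
   N = ((C - r * s) * (C - r * s) - ((C - r * s) - C + (r + s) * (C - r * s))) / C].
Proof.
move=> hC h1 h2 h3.
have eA : A = r + s + C by rewrite h1; ring.
have eP : P = C - r * s by rewrite h2; ring.
split => //.
have h : C * N = P * P - (P - C + (A - C) * P) by rewrite h3; ring.
apply: (mulIf hC); rewrite mulfVK // mulrC h eA eP; ring.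
Qed.

Arguments alg_pre {R r s N P A C}.
Arguments eqn {R}.

Lemma algF (R : fieldType) (r s N P A C X Y : R) :
  C != 0 -> r + s = A - C -> r * s = C - P -> P * P = P - C + (A - C) * P + C * N ->
  eqn P A C N (r * N + P - r) (- N + P - r) (P - r) (N * (r - s)) X Y.
Proof.
move=> hC h1 h2 h3; case: (alg_pre hC h1 h2 h3) => eA eP eN.
rewrite eN eA eP /eqn; field; exact: hC.
Qed.
Lemma algG (R : fieldType) (r s N P A C X Y : R) :
  C != 0 -> r + s = A - C -> r * s = C - P -> P * P = P - C + (A - C) * P + C * N ->
  eqn P A C N (r * N + P - s) (- N + P - s) (P - s) (N * (r - s)) X Y.
Proof.
move=> hC h1 h2 h3; case: (alg_pre hC h1 h2 h3) => eA eP eN.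
rewrite eN eA eP /eqn; field; exact: hC.
Qed.
Lemma algH (R : fieldType) (r s N P A C X Y : R) :
  C != 0 -> r + s = A - C -> r * s = C - P -> P * P = P - C + (A - C) * P + C * N ->
  eqn P A C N (- s * N + s - P) (N + s - P) (s - P) (N * (r - s)) X Y.
Proof.
move=> hC h1 h2 h3; case: (alg_pre hC h1 h2 h3) => eA eP eN.
rewrite eN eA eP /eqn; field; exact: hC.
Qed.

Lemma srg_facts (R : fieldType) (T : finType) (e : rel T) (n p a c : nat) :
  strongly_regular e n p a c ->
  [/\ irreflexive e, symmetric e, (forall x, \sum_z ((e x z)%:R : R) = p%:R),
      (forall x y, \sum_z ((e x z)%:R * (e z y)%:R : R) = Kf e p%:R a%:R c%:R x y)
    & #|T| = n].
Proof.
case=> sym [irr [hn [_ [_ [hp [ha hc]]]]]].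
split => //; first by move=> x; rewrite sumr_ind hp.
move=> x y.
under eq_bigr => z _ do rewrite -natrM mulnb.
rewrite (sumr_ind R (fun z => e x z && e z y)) /Kf.
case: eqP => [<-|/eqP nxy].
  rewrite -(hp x); congr (_%:R); apply: eq_card => z; by rewrite !inE (sym z x) andbb.
case: (boolP (e x y)) => exy.
  rewrite -(ha x y nxy exy); congr (_%:R); apply: eq_card => z; by rewrite !inE (sym z y).
rewrite -(hc x y nxy exy); congr (_%:R); apply: eq_card => z; by rewrite !inE (sym z y).
Qed.

Lemma Kf_prod3 (T : finType) (e : rel T) (R : fieldType) (f0 f1 f2 g0 g1 g2 h0 h1 h2 : R) x y :
  Kf e f0 f1 f2 x y * Kf e g0 g1 g2 x y * Kf e h0 h1 h2 x y =
  Kf e (f0 * g0 * h0) (f1 * g1 * h1) (f2 * g2 * h2) x y.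
Proof. by rewrite /Kf; case: (x == y); case: (e x y). Qed.

Lemma krein (T : finType) (e : rel T) (R : realFieldType)
    (P f0 f1 f2 g0 g1 g2 h0 h1 h2 lf lg lh : R) :
  irreflexive e -> symmetric e -> (forall x, \sum_z ((e x z)%:R : R) = P) ->
  0 < #|T|%:R :> R -> 0 < lf -> 0 < lg -> 0 < lh ->
  (forall x y, \sum_z Kf e f0 f1 f2 x z * Kf e f0 f1 f2 z y = lf * Kf e f0 f1 f2 x y) ->
  (forall x y, \sum_z Kf e g0 g1 g2 x z * Kf e g0 g1 g2 z y = lg * Kf e g0 g1 g2 x y) ->
  (forall x y, \sum_z Kf e h0 h1 h2 x z * Kf e h0 h1 h2 z y = lh * Kf e h0 h1 h2 x y) ->
  0 <= f0 * g0 * h0 + f1 * g1 * h1 * P + f2 * g2 * h2 * (#|T|%:R - P - 1).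
Proof.
move=> irr sym hP hT lf0 lg0 lh0 hF hG hH.
have := @schur3 T R (Kf e f0 f1 f2) (Kf e g0 g1 g2) (Kf e h0 h1 h2) lf lg lh
   lf0 lg0 lh0 (fun x y => Kf_sym f0 f1 f2 x y sym) (fun x y => Kf_sym g0 g1 g2 x y sym)
   (fun x y => Kf_sym h0 h1 h2 x y sym) hF hG hH.
under eq_bigr => x _ do under eq_bigr => y _ do rewrite Kf_prod3.
under eq_bigr => x _ do rewrite (Kf_row _ _ _ x irr hP).
rewrite sumr_cst pmulr_lge0 //.
have -> : f0 * g0 * h0 + f1 * g1 * h1 * P + f2 * g2 * h2 * (#|T|%:R - P - 1) =
  f0 * g0 * h0 - f2 * g2 * h2 + (f1 * g1 * h1 - f2 * g2 * h2) * P + f2 * g2 * h2 * #|T|%:R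
  by ring.
by [].
Qed.

Theorem mainTheorem4 (R : rcfType) (T : finType) (e : rel T) (n p a c : nat) :
  strongly_regular e n p a c ->
  (0 < c)%N -> (c < p)%N -> (p < n - 1)%N ->
  let r : R := srg_r R p a c in
  let s : R := srg_s R p a c in
  let N : R := n%:R in
  let P : R := p%:R in
  [/\ 0 <= (r * N + P - r) ^+ 3 + (- N + P - r) ^+ 3 * P + (P - r) ^+ 3 * (N - P - 1),
      0 <= (r * N + P - s) ^+ 3 + (- N + P - s) ^+ 3 * P + (P - s) ^+ 3 * (N - P - 1),
      0 <= (r * N + P - r) ^+ 2 * (r * N + P - s) + (- N + P - r) ^+ 2 * (- N + P - s) * P
           + (P - r) ^+ 2 * (P - s) * (N - P - 1),
      0 <= (r * N + P - r) * (r * N + P - s) ^+ 2 + (- N + P - r) * (- N + P - s) ^+ 2 * P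
           + (P - r) * (P - s) ^+ 2 * (N - P - 1)
    & 0 <= (`|s| * N + s - P) ^+ 2 * (r * N + P - s) + (N + s - P) ^+ 2 * (- N + P - s) * P
           + (s - P) ^+ 2 * (P - s) * (N - P - 1)].
Proof.
move=> srg c0 cp pn r s N P.
have [irr sym hP hA hn] := @srg_facts R T e n p a c srg.
have hN : #|T|%:R = N by rewrite hn.
have hC : (c%:R : R) != 0 by rewrite pnatr_eq0 -lt0n.
have CP : (c%:R : R) < P by rewrite ltr_nat.
have N0 : 0 < N by rewrite ltr0n; case: (n) pn.
set D : R := (a%:R - c%:R) ^+ 2 + 4 * (p%:R - c%:R).
have D0 : 0 < D.
  rewrite /D; apply: ltr_wpDl; first exact: sqr_ge0.
  by apply: mulr_gt0 => //; rewrite subr_gt0.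
set q := Num.sqrt D.
have hq : q ^+ 2 = D by rewrite sqr_sqrtr // ltW.
have q0 : 0 < q by rewrite sqrtr_gt0.
have er : r = ((a%:R - c%:R) + q) / 2 by [].
have es : s = ((a%:R - c%:R) - q) / 2 by [].
clearbody r s.
have h1 : r + s = a%:R - c%:R by rewrite er es; field.
have h2 : r * s = c%:R - P.
  have -> : r * s = ((a%:R - c%:R) ^+ 2 - q ^+ 2) / 4 by rewrite er es; field.
  by rewrite hq /D /P; field.
have hrs : r - s = q by rewrite er es; field.
have sneg : s < 0.
  rewrite ltNge; apply/negP => s0.
  have r0 : 0 <= r by rewrite -(subrK s r) hrs; apply: addr_ge0 => //; exact: ltW.
  have := mulr_ge0 r0 s0.
  by rewrite h2 subr_ge0 leNgt CP.
have hpar : P * P = P - c%:R + (a%:R - c%:R) * P + c%:R * N.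
  have [x0 [y0 _]] := (let: conj _ (conj _ (conj _ (conj h _))) := srg in h).
  have := Kf_row P a%:R c%:R x0 irr hP.
  rewrite -(eq_bigr _ (fun y _ => hA x0 y)) exchange_big /=.
  under eq_bigr => z _ do rewrite -big_distrr /= hP.
  rewrite -big_distrl /= hP hN => ->; ring.
have lpos : 0 < N * (r - s) by rewrite hrs mulr_gt0.
have T0 : 0 < #|T|%:R :> R by rewrite hN.
have eF := @eig T e R P a%:R c%:R N _ _ _ _ irr sym hP hA hN
   (fun X Y => @algF R r s N P a%:R c%:R X Y hC h1 h2 hpar).
have eG := @eig T e R P a%:R c%:R N _ _ _ _ irr sym hP hA hN
   (fun X Y => @algG R r s N P a%:R c%:R X Y hC h1 h2 hpar).
have eH := @eig T e R P a%:R c%:R N _ _ _ _ irr sym hP hA hN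
   (fun X Y => @algH R r s N P a%:R c%:R X Y hC h1 h2 hpar).
rewrite (ler0_norm (ltW sneg)).
split.
- have := krein irr sym hP T0 lpos lpos lpos eF eF eF; rewrite hN.
  by congr (_ <= _); ring.
- have := krein irr sym hP T0 lpos lpos lpos eG eG eG; rewrite hN.
  by congr (_ <= _); ring.
- have := krein irr sym hP T0 lpos lpos lpos eF eF eG; rewrite hN.
  by congr (_ <= _); ring.
- have := krein irr sym hP T0 lpos lpos lpos eF eG eG; rewrite hN.
  by congr (_ <= _); ring.
- have := krein irr sym hP T0 lpos lpos lpos eH eH eG; rewrite hN.
  by congr (_ <= _); ring.
Qed.
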